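(* For all integers $m,k\ge 0$, $$\zeta(\bar 1,\{1\}_m,\bar 1,\{1\}_k)=(-1)^{m+1}\,\mathrm{Li}_{k+2,\{1\}_m}\!\left(\tfrac12\right).$$
   Context: For nonzero integers $s_1,\dots,s_k$, with $\operatorname{sgn}(s)=1$ if $s>0$ and $-1$ if $s<0$, the multiple zeta value is $\zeta(s_1,\dots,s_k)=\sum_{n_1>n_2>\cdots>n_k\ge 1}\prod_{j=1}^k n_j^{-|s_j|}\operatorname{sgn}(s_j)^{n_j}$. A barred entry $\bar p$ denotes the negative entry $-p$. The notation $\{1\}_d$ means the entry $1$ repeated $d$ times ($d=0$ means no entries). For positive integers $s_1,\dots,s_r$ and $0\le x<1$, the multiple polylogarithm is $\mathrm{Li}_{s_1,\dots,s_r}(x)=\sum_{n_1>\cdots>n_r>0}\frac{x^{n_1}}{n_1^{s_1}\cdots n_r^{s_r}}$. *)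

(* Defs.v *)
From Stdlib Require Import Reals ZArith List.
From Coquelicot Require Import Coquelicot.
Open Scope R_scope.

(* Summand of an (alternating) MZV for a nonzero signed entry s at index n >= 1:
   sgn(s)^n / n^|s|.  (Index 0 is excluded explicitly by the sums below.) *)
Definition mzv_term (s : Z) (n : nat) : R :=
  (if (0 <? s)%Z then 1 else (-1) ^ n) / (INR n) ^ (Z.abs_nat s).

(* Truncated nested sum:
   mzv_trunc [s_1;...;s_k] N = sum_{N >= n_1 > n_2 > ... > n_k >= 1}
                               prod_j sgn(s_j)^{n_j} / n_j^{|s_j|}. *)
Fixpoint mzv_trunc (s : list Z) (N : nat) : R :=
  match s with
  | nil => 1
  | a :: t =>
      sum_n (fun n => if Nat.eqb n 0 then 0
                      else mzv_term a n * mzv_trunc t (n - 1)) N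
  end.

Definition mzv_converges_to (s : list Z) (L : R) : Prop :=
  is_lim_seq (fun N => mzv_trunc s N) L.

(* Truncated multiple polylogarithm:
   Li_trunc x [s_1;...;s_r] N = sum_{N >= n_1 > ... > n_r > 0}
                                x^{n_1} / (n_1^{s_1} ... n_r^{s_r}). *)
Definition Li_trunc (x : R) (s : list nat) (N : nat) : R :=
  match s with
  | nil => 0
  | a :: t =>
      sum_n (fun n => if Nat.eqb n 0 then 0
                      else x ^ n / (INR n) ^ a
                           * mzv_trunc (map Z.of_nat t) (n - 1)) N
  end.

Definition Li_converges_to (x : R) (s : list nat) (L : R) : Prop :=
  is_lim_seq (fun N => Li_trunc x s N) L.

(* Main.v *)
Require Import Defs.
From Stdlib Require Import Reals ZArith List Lra Lia.
From Coquelicot Require Import Coquelicot.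
Open Scope R_scope.

Ltac fixeq := match goal with |- @eq _ ?x ?y => change (@eq R x y) end.

Lemma sum_n_S (a : nat -> R) n : sum_n a (S n) = sum_n a n + a (S n).
Proof. exact (sum_Sn a n). Qed.

Lemma sum_n_0 (a : nat -> R) : sum_n a 0 = a 0%nat.
Proof. exact (sum_O a). Qed.

Lemma mzv_trunc_0 a t : mzv_trunc (a :: t) 0 = 0.
Proof. simpl. rewrite sum_n_0. reflexivity. Qed.

Lemma mzv_trunc_S a t n :
  mzv_trunc (a :: t) (S n) = mzv_trunc (a :: t) n + mzv_term a (S n) * mzv_trunc t n.
Proof.
  simpl mzv_trunc at 1. rewrite sum_n_S. simpl.
  replace (n - 0)%nat with n by lia. reflexivity.
Qed.

Lemma mzv_term_1 n : mzv_term 1 n = / INR n.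
Proof. unfold mzv_term. simpl. rewrite Rmult_1_r. unfold Rdiv. ring. Qed.

Lemma mzv_term_m1 n : mzv_term (-1) n = (-1) ^ n / INR n.
Proof. unfold mzv_term. simpl. rewrite Rmult_1_r. reflexivity. Qed.

Lemma mzv_term_abs a n : Z.abs_nat a = 1%nat -> Rabs (mzv_term a n) = / INR n.
Proof.
  intros Ha. unfold mzv_term. rewrite Ha. simpl. rewrite Rmult_1_r.
  unfold Rdiv. rewrite Rabs_mult.
  destruct (0 <? a)%Z.
  - rewrite Rabs_R1, Rmult_1_l. apply Rabs_pos_eq.
    destruct n. simpl. rewrite Rinv_0. lra.
    left. apply Rinv_0_lt_compat. apply lt_0_INR. lia.
  - rewrite pow_1_abs, Rmult_1_l. apply Rabs_pos_eq.
    destruct n. simpl. rewrite Rinv_0. lra.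
    left. apply Rinv_0_lt_compat. apply lt_0_INR. lia.
Qed.

Definition H (n : nat) : R := sum_n (fun j => if Nat.eqb j 0 then 0 else / INR j) n.

Lemma H_0 : H 0 = 0.
Proof. unfold H. rewrite sum_n_0. reflexivity. Qed.

Lemma H_S n : H (S n) = H n + / INR (S n).
Proof. unfold H. rewrite sum_n_S. reflexivity. Qed.

Lemma inv_Sn_pos n : 0 < / INR (S n).
Proof. apply Rinv_0_lt_compat. apply lt_0_INR. lia. Qed.

Lemma H_nonneg n : 0 <= H n.
Proof. induction n. rewrite H_0; lra. rewrite H_S. pose proof (inv_Sn_pos n). lra. Qed.

Lemma H_le_S n : H n <= H (S n).
Proof. rewrite H_S. pose proof (inv_Sn_pos n). lra. Qed.

Lemma H_mono n m : (n <= m)%nat -> H n <= H m.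
Proof. induction 1. lra. pose proof (H_le_S m). lra. Qed.

Lemma H_ge1 n : 1 <= H (S n).
Proof.
  induction n. rewrite H_S, H_0. simpl. lra.
  pose proof (H_le_S (S n)). lra.
Qed.

Lemma H_le_n n : H n <= INR n.
Proof.
  induction n. rewrite H_0; simpl; lra.
  assert (/ INR (S n) <= 1).
  { rewrite <- Rinv_1. apply Rinv_le_contravar. lra. rewrite S_INR. pose proof (pos_INR n). lra. }
  rewrite H_S. set (y := / INR (S n)) in *. rewrite S_INR. lra.
Qed.

Definition unit_list (s : list Z) := List.Forall (fun a => Z.abs_nat a = 1%nat) s.

Lemma mzv_bound s : unit_list s -> forall n, Rabs (mzv_trunc s n) <= H n ^ length s.
Proof.
  induction s as [|a t IH]; intros Hs n.
  - simpl. rewrite Rabs_R1. lra.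
  - inversion Hs; subst. specialize (IH H3).
    induction n.
    + rewrite mzv_trunc_0, H_0, Rabs_R0. simpl. lra.
    + rewrite mzv_trunc_S. simpl length.
      eapply Rle_trans. apply Rabs_triang.
      rewrite Rabs_mult, mzv_term_abs by assumption.
      pose proof (IH n). pose proof (inv_Sn_pos n).
      assert (H n ^ length t <= H (S n) ^ length t).
      { apply pow_incr. split. apply H_nonneg. apply H_le_S. }
      assert (0 <= H n ^ length t) by (apply pow_le; apply H_nonneg).
      change (H (S n) ^ S (length t)) with (H (S n) * H (S n) ^ length t).
      change (H n ^ S (length t)) with (H n * H n ^ length t) in IHn.
      pose proof (H_nonneg n).
      assert (H n * H n ^ length t <= H n * H (S n) ^ length t) by (apply Rmult_le_compat_l; lra).
      rewrite H_S in *. set (y := / INR (S n)) in *.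
      set (P := (H n + y) ^ length t) in *.
      assert (y * Rabs (mzv_trunc t n) <= y * P) by (apply Rmult_le_compat_l; lra).
      change (length (a :: t)) with (S (length t)) in IHn. change (H n ^ S (length t)) with (H n * H n ^ length t) in IHn. nra.
Qed.

Lemma mzv_incr_bound a t n : unit_list (a :: t) ->
  Rabs (mzv_trunc (a :: t) (S n) - mzv_trunc (a :: t) n) <= H n ^ length t * / INR (S n).
Proof.
  intros Hs. inversion Hs; subst.
  rewrite mzv_trunc_S. replace (mzv_trunc (a :: t) n + mzv_term a (S n) * mzv_trunc t n -
   mzv_trunc (a :: t) n) with (mzv_term a (S n) * mzv_trunc t n) by ring.
  rewrite Rabs_mult, mzv_term_abs by assumption.
  rewrite Rmult_comm. apply Rmult_le_compat_r. left; apply inv_Sn_pos.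
  apply mzv_bound; assumption.
Qed.


Lemma sum_n_le (a b : nat -> R) N : (forall n, a n <= b n) -> sum_n a N <= sum_n b N.
Proof.
  intros Hab. induction N. rewrite !sum_n_0; auto.
  rewrite !sum_n_S. specialize (Hab (S N)). lra.
Qed.

Lemma sum_n_scal (c : R) (a : nat -> R) N : sum_n (fun n => c * a n) N = c * sum_n a N.
Proof.
  induction N. rewrite !sum_n_0; auto. rewrite !sum_n_S, IHN. fixeq; ring.
Qed.

Lemma sum_n_add (a b : nat -> R) N : sum_n (fun n => a n + b n) N = sum_n a N + sum_n b N.
Proof.
  induction N. rewrite !sum_n_0; auto. rewrite !sum_n_S, IHN. fixeq; ring.
Qed.

Lemma sum_n_nonneg (a : nat -> R) N : (forall n, 0 <= a n) -> 0 <= sum_n a N.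
Proof.
  intros Ha. induction N. rewrite !sum_n_0; auto. rewrite !sum_n_S. specialize (Ha (S N)). lra.
Qed.

Lemma INR_S_pos n : 0 < INR (S n).
Proof. apply lt_0_INR. lia. Qed.

Lemma sbp_gen (a : nat -> R) N :
  sum_n (fun n => if Nat.eqb n 0 then 0 else a n * (/ INR n - / INR (S n))) N =
  sum_n (fun n => if Nat.eqb n 0 then 0 else (a n - a (pred n)) / INR n) N + a 0%nat - a N / INR (S N).
Proof.
  induction N.
  - rewrite !sum_n_0. simpl. fixeq; field.
  - rewrite !sum_n_S, IHN. simpl Nat.eqb. simpl pred.
    pose proof (INR_S_pos N). pose proof (INR_S_pos (S N)).
    cbv beta iota. fixeq; field; lra.
Qed.

Definition u (rr : nat) (n : nat) : R :=
  if Nat.eqb n 0 then 0 else H n ^ rr / (INR n * INR (S n)).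

Lemma u_nonneg rr n : 0 <= u rr n.
Proof.
  unfold u. destruct (Nat.eqb_spec n 0). lra.
  apply Rmult_le_pos. apply pow_le, H_nonneg.
  left. apply Rinv_0_lt_compat. apply Rmult_lt_0_compat; apply lt_0_INR; lia.
Qed.

Lemma u_alt rr n : u rr n = if Nat.eqb n 0 then 0 else H n ^ rr * (/ INR n - / INR (S n)).
Proof.
  unfold u. destruct (Nat.eqb_spec n 0). auto.
  assert (0 < INR n) by (apply lt_0_INR; lia). rewrite S_INR in *. field. lra.
Qed.

Lemma pow_diff a b rr : 0 <= b <= a -> a ^ S rr - b ^ S rr <= INR (S rr) * a ^ rr * (a - b).
Proof.
  intros [Hb Hab]. induction rr.
  - simpl. lra.
  - change (a ^ S (S rr)) with (a * a ^ S rr). change (b ^ S (S rr)) with (b * b ^ S rr).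
    assert (0 <= b ^ S rr) by (apply pow_le; lra).
    assert (b ^ S rr <= a ^ S rr) by (apply pow_incr; lra).
    assert (a * (a ^ S rr - b ^ S rr) <= a * (INR (S rr) * a ^ rr * (a - b))) by (apply Rmult_le_compat_l; lra).
    assert (b ^ S rr * (a - b) <= a ^ S rr * (a - b)) by (apply Rmult_le_compat_r; lra).
    replace (INR (S (S rr))) with (INR (S rr) + 1) by (rewrite (S_INR (S rr)); ring).
    assert (E1 : (INR (S rr) + 1) * a ^ S rr * (a - b) = a * (INR (S rr) * a ^ rr * (a - b)) + a ^ S rr * (a - b)) by (simpl; ring).
    rewrite E1. lra.
Qed.

Fixpoint Bd (rr : nat) : R := match rr with O => 1 | S r => 2 * INR (S r) * Bd r end.

Lemma u_sum_bound rr N : sum_n (u rr) N <= Bd rr.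
Proof.
  revert N. induction rr; intro N.
  - rewrite (sum_n_ext _ (fun n => if Nat.eqb n 0 then 0 else 1 * (/ INR n - / INR (S n)))).
    2:{ intro n. rewrite u_alt. simpl. reflexivity. }
    rewrite (sbp_gen (fun _ => 1)).
    rewrite (sum_n_ext _ (fun _ => 0)).
    2:{ intro n. destruct (Nat.eqb n 0); [reflexivity|]. unfold Rdiv. fixeq; ring. }
    assert (Hz : sum_n (fun _ : nat => 0) N = 0).
    { induction N. rewrite sum_n_0; auto. rewrite sum_n_S, IHN. fixeq; ring. }
    rewrite Hz. change (Bd 0) with 1. pose proof (INR_S_pos N) as HN.
    assert (0 < 1 / INR (S N)) by (apply Rdiv_lt_0_compat; lra). lra.
  - rewrite (sum_n_ext _ (fun n => if Nat.eqb n 0 then 0 else H n ^ S rr * (/ INR n - / INR (S n)))).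
    2:{ intro n. rewrite u_alt. reflexivity. }
    rewrite (sbp_gen (fun n => H n ^ S rr)). rewrite H_0.
    assert (Hp : 0 <= H N ^ S rr / INR (S N)).
    { apply Rmult_le_pos. apply pow_le, H_nonneg. left; apply Rinv_0_lt_compat, INR_S_pos. }
    assert (Hs : sum_n (fun n => if Nat.eqb n 0 then 0 else (H n ^ S rr - H (pred n) ^ S rr) / INR n) N
            <= sum_n (fun n => 2 * INR (S rr) * u rr n) N).
    { apply sum_n_le. intro n. unfold u. destruct (Nat.eqb_spec n 0). lra.
      destruct n as [|n]. lia. simpl pred.
      pose proof (pow_diff (H (S n)) (H n) rr (conj (H_nonneg n) (H_le_S n))) as Hd.
      rewrite H_S in Hd at 3. replace (H n + / INR (S n) - H n) with (/ INR (S n)) in Hd by ring.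
      pose proof (INR_S_pos n) as P1. pose proof (INR_S_pos (S n)) as P2.
      assert (P3 : 0 <= H (S n) ^ rr) by (apply pow_le, H_nonneg).
      apply Rle_trans with (INR (S rr) * H (S n) ^ rr * / INR (S n) / INR (S n)).
      { unfold Rdiv. apply Rmult_le_compat_r. left; apply Rinv_0_lt_compat; lra. exact Hd. }
      set (h := H (S n) ^ rr) in *. set (r := INR (S rr)) in *.
      assert (0 <= r) by (apply pos_INR).
      assert (0 <= r * h) by (apply Rmult_le_pos; lra).
      rewrite (S_INR (S n)).
      set (q := INR (S n)) in *.
      unfold Rdiv.
      replace (r * h * / q * / q) with (r * h * (/ q * / q)) by ring.
      replace (2 * r * (h * / (q * (q + 1)))) with (r * h * (2 * / (q * (q + 1)))) by (field; lra).
      apply Rmult_le_compat_l. lra.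
      assert (Hq : 1 <= q) by (unfold q; rewrite S_INR; pose proof (pos_INR n); lra).
      assert (E : 2 * / (q * (q + 1)) - / q * / q = (q - 1) / (q * q * (q + 1))) by (field; lra).
      assert (0 <= (q - 1) / (q * q * (q + 1))).
      { apply Rmult_le_pos. lra. left. apply Rinv_0_lt_compat. apply Rmult_lt_0_compat. nra. lra. }
      lra. }
    rewrite sum_n_scal in Hs. specialize (IHrr N).
    assert (0 <= 2 * INR (S rr)) by (pose proof (INR_S_pos rr); lra).
    assert (2 * INR (S rr) * sum_n (u rr) N <= 2 * INR (S rr) * Bd rr) by (apply Rmult_le_compat_l; lra).
    change (Bd (S rr)) with (2 * INR (S rr) * Bd rr). rewrite pow_i by lia. lra.
Qed.


Lemma ex_series_bounded (a : nat -> R) (B : R) :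
  (forall n, 0 <= a n) -> (forall N, sum_n a N <= B) -> ex_series a.
Proof.
  intros Ha HB.
  destruct (ex_finite_lim_seq_incr (sum_n a) B) as [l Hl].
  - intro n. rewrite sum_n_S. specialize (Ha (S n)). lra.
  - exact HB.
  - exists l. exact Hl.
Qed.

Lemma ex_series_u r : ex_series (u r).
Proof. apply ex_series_bounded with (Bd r). apply u_nonneg. apply u_sum_bound. Qed.

Lemma u_tail r N j :
  H N ^ r * (/ INR (S N) - / INR (S (N + j))) <= sum_n (u r) (N + j) - sum_n (u r) N.
Proof.
  induction j.
  - rewrite Nat.add_0_r. replace (/ INR (S N) - / INR (S N)) with 0 by ring. lra.
  - rewrite Nat.add_succ_r, sum_n_S.
    assert (Hu : H N ^ r * (/ INR (S (N + j)) - / INR (S (S (N + j)))) <= u r (S (N + j))).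
    { rewrite u_alt. simpl Nat.eqb. cbv beta iota.
      apply Rmult_le_compat_r.
      - assert (/ INR (S (S (N + j))) <= / INR (S (N + j))).
        { apply Rinv_le_contravar. apply INR_S_pos. apply le_INR. lia. }
        lra.
      - apply pow_incr. split. apply H_nonneg. apply H_mono. lia. }
    lra.
Qed.

Lemma lim_subseq_diff (s : nat -> R) (l : R) :
  is_lim_seq s l -> is_lim_seq (fun n => s (S n + S n)%nat - s (S n)) 0.
Proof.
  intros Hs.
  replace 0 with (l - l) by ring.
  apply is_lim_seq_minus'.
  - apply (is_lim_seq_subseq s l (fun n => S n + S n)%nat); [|exact Hs].
    intros P [N HN]. exists N. intros n Hn. apply HN. lia.
  - apply (is_lim_seq_subseq s l (fun n => S n)%nat); [|exact Hs].
    intros P [N HN]. exists N. intros n Hn. apply HN. lia.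
Qed.

Lemma Hpow_div_lim r : is_lim_seq (fun N => H N ^ r / INR (S N)) 0.
Proof.
  apply is_lim_seq_incr_1.
  destruct (ex_series_u r) as [l Hl].
  pose proof (lim_subseq_diff (sum_n (u r)) l Hl) as Hd.
  apply is_lim_seq_le_le with (u := fun _ => 0) (w := fun n => 3 * (sum_n (u r) (S n + S n) - sum_n (u r) (S n))).
  - intro n. split.
    + apply Rmult_le_pos. apply pow_le, H_nonneg. left; apply Rinv_0_lt_compat, INR_S_pos.
    + pose proof (u_tail r (S n) (S n)) as Ht.
      assert (Hp0 : 0 <= H (S n) ^ r) by (apply pow_le, H_nonneg).
      assert (Hineq : / INR (S (S n)) <= 3 * (/ INR (S (S n)) - / INR (S (S n + S n)))).
      { rewrite !S_INR. rewrite plus_INR, !S_INR. pose proof (pos_INR n).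
        assert (E : 3 * (/ (INR n + 1 + 1) - / (INR n + 1 + (INR n + 1) + 1)) - / (INR n + 1 + 1)
                    = (INR n) / ((INR n + 1 + 1) * (INR n + 1 + (INR n + 1) + 1))) by (field; lra).
        assert (0 <= (INR n) / ((INR n + 1 + 1) * (INR n + 1 + (INR n + 1) + 1))).
        { apply Rmult_le_pos. lra. left. apply Rinv_0_lt_compat. apply Rmult_lt_0_compat; lra. }
        lra. }
      unfold Rdiv.
      apply Rle_trans with (H (S n) ^ r * (3 * (/ INR (S (S n)) - / INR (S (S n + S n))))).
      * apply Rmult_le_compat_l; assumption.
      * lra.
  - apply is_lim_seq_const.
  - replace 0 with (3 * 0) by ring. apply (is_lim_seq_scal_l _ 3 0). exact Hd.
Qed.


Lemma ex_series_le_R (a : nat -> R) (b : nat -> R) : (forall n, Rabs (a n) <= b n) -> ex_series b -> ex_series a.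
Proof. intros H1 H2. apply (@ex_series_le R_AbsRing R_CompleteNormedModule a b). exact H1. exact H2. Qed.
Lemma ex_series_scal_R (c : R) (a : nat -> R) : ex_series a -> ex_series (fun n => c * a n).
Proof. intros H. apply (@ex_series_scal_l R_AbsRing R_NormedModule c a H). Qed.
Lemma ex_series_incr_n_R (a : nat -> R) n : ex_series a -> ex_series (fun k => a (n + k)%nat).
Proof. intros H. apply (@ex_series_incr_n R_AbsRing R_NormedModule a n). exact H. Qed.

Lemma lim_pow (v : nat -> R) (l : R) j : is_lim_seq v l -> is_lim_seq (fun p => v p ^ j) (l ^ j).
Proof.
  intros Hv. induction j.
  - simpl. apply is_lim_seq_const.
  - simpl. apply is_lim_seq_mult'; assumption.
Qed.

Lemma lim_sum (g : nat -> nat -> R) (l : nat -> R) n :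
  (forall i, is_lim_seq (fun p => g i p) (l i)) ->
  is_lim_seq (fun p => sum_n (fun i => g i p) n) (sum_n l n).
Proof.
  intros Hg. induction n.
  - rewrite sum_n_0. eapply is_lim_seq_ext. 2: apply (Hg 0%nat). intro p. rewrite sum_n_0. reflexivity.
  - rewrite sum_n_S. eapply is_lim_seq_ext.
    2: apply (is_lim_seq_plus' _ _ _ _ IHn (Hg (S n))).
    intro p. rewrite sum_n_S. reflexivity.
Qed.

Lemma series_dct (f : nat -> nat -> R) (g h : nat -> R) :
  (forall n, is_lim_seq (fun p => f p n) (g n)) ->
  (forall p n, Rabs (f p n) <= h n) -> ex_series h ->
  is_lim_seq (fun p => Series (f p)) (Series g).
Proof.
  intros Hfg Hfh Hh.
  assert (Hgh : forall n, Rabs (g n) <= h n).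
  { intro n. assert (L := is_lim_seq_le (fun p => Rabs (f p n)) (fun _ => h n) (Rabs (g n)) (h n)).
    simpl in L. apply L. intro p. apply Hfh.
    apply (is_lim_seq_abs _ (g n)). apply Hfg. apply is_lim_seq_const. }
  assert (Hexf : forall p, ex_series (f p)).
  { intro p. apply ex_series_le_R with h. intro n. apply Hfh. exact Hh. }
  assert (Hexg : ex_series g).
  { apply ex_series_le_R with h. intro n. apply Hgh. exact Hh. }
  assert (Hh0 : forall n, 0 <= h n).
  { intro n. eapply Rle_trans. apply Rabs_pos. apply (Hgh n). }
  set (T := fun M => Series (fun k => h (S M + k)%nat)).
  assert (HT : is_lim_seq T 0).
  { assert (E : forall M, T M = Series h - sum_n h M).
    { intro M. unfold T. rewrite (Series_incr_n h (S M)) by (lia || exact Hh).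
      simpl pred. rewrite sum_n_Reals. ring. }
    eapply is_lim_seq_ext. intro M. symmetry. apply E.
    replace 0 with (Series h - Series h) by ring.
    apply is_lim_seq_minus'. apply is_lim_seq_const.
    apply Series_correct. exact Hh. }
  apply is_lim_seq_spec. intro eps.
  apply is_lim_seq_spec in HT. destruct (HT (pos_div_2 (pos_div_2 eps))) as [M0 HM0].
  set (M := M0).
  assert (HTM : T M < eps / 4).
  { specialize (HM0 M0 (le_n _)). simpl in HM0. rewrite Rminus_0_r in HM0.
    apply Rabs_lt_between in HM0. fold M in HM0. lra. }
  assert (Hfin : is_lim_seq (fun p => sum_n (fun n => f p n - g n) M) 0).
  { replace 0 with (sum_n (fun _ => 0) M).
    apply lim_sum. intro i. replace 0 with (g i - g i) by ring.
    apply is_lim_seq_minus'. apply Hfg. apply is_lim_seq_const.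
    clear. induction M. rewrite sum_n_0; auto. rewrite sum_n_S, IHM. fixeq; ring. }
  apply is_lim_seq_spec in Hfin. destruct (Hfin (pos_div_2 eps)) as [N HN].
  exists N. intros p Hp. specialize (HN p Hp). simpl in HN. rewrite Rminus_0_r in HN.
  rewrite <- Series_minus by auto.
  set (w := fun n => f p n - g n).
  assert (Hw : forall n, Rabs (w n) <= 2 * h n).
  { intro n. unfold w. eapply Rle_trans. apply Rabs_triang. rewrite Rabs_Ropp.
    pose proof (Hfh p n). pose proof (Hgh n). lra. }
  assert (Hexw : ex_series (fun n => Rabs (w n))).
  { apply ex_series_le_R with (fun n => 2 * h n). intro n. rewrite Rabs_Rabsolu. apply Hw.
    apply (ex_series_scal_R 2 h). exact Hh. }
  rewrite (Series_incr_n w (S M)) by (lia || (apply ex_series_Rabs; exact Hexw)).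
  simpl pred. rewrite <- sum_n_Reals.
  assert (Htail : Rabs (Series (fun k => w (S M + k)%nat)) <= 2 * T M).
  { eapply Rle_trans. apply Series_Rabs. apply (ex_series_incr_n_R (fun n => Rabs (w n)) (S M)). exact Hexw.
    unfold T. rewrite <- Series_scal_l. apply Series_le.
    intro n. split. apply Rabs_pos. apply Hw.
    apply (ex_series_scal_R 2 (fun k => h (S M + k)%nat)). apply (ex_series_incr_n_R h (S M)). exact Hh. }
  change (sum_n w M) with (sum_n (fun n => f p n - g n) M).
  eapply Rle_lt_trans. apply Rabs_triang. lra.
Qed.


Definition Pp (x : R) (n : nat) : R := sum_n (fun j => (- x) ^ j) n.

Lemma Pp_closed x n : (1 + x) * Pp x n = 1 - (- x) ^ (S n).
Proof.
  unfold Pp. induction n.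
  - rewrite sum_n_0. simpl. ring.
  - rewrite sum_n_S, Rmult_plus_distr_l, IHn. simpl. ring.
Qed.

Lemma Pp_bound x n : 0 <= x <= 1 -> Rabs (Pp x n) <= 1.
Proof.
  intros Hx.
  assert (Hpow : Rabs ((- x) ^ S n) <= x).
  { rewrite <- RPow_abs, Rabs_Ropp, Rabs_pos_eq by lra. simpl.
    assert (x ^ n <= 1) by (rewrite <- (pow1 n); apply pow_incr; lra). assert (0 <= x ^ n) by (apply pow_le; lra). nra. }
  pose proof (Pp_closed x n) as E.
  assert (HH : Rabs ((1 + x) * Pp x n) <= 1 + x).
  { rewrite E. eapply Rle_trans. apply Rabs_triang. rewrite Rabs_Ropp, Rabs_R1. lra. }
  rewrite Rabs_mult, (Rabs_pos_eq (1 + x)) in HH by lra.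
  pose proof (Rabs_pos (Pp x n)). nra.
Qed.

Lemma sbp_x x (d : nat -> R) N :
  sum_n (fun n => (- x) ^ n * d n) (S N) =
  Pp x (S N) * d (S N) + sum_n (fun n => Pp x n * (d n - d (S n))) N.
Proof.
  induction N.
  - rewrite sum_n_S, !sum_n_0. unfold Pp. rewrite sum_n_S, sum_n_0. fixeq. ring.
  - rewrite sum_n_S, IHN. rewrite (sum_n_S _ N). unfold Pp. rewrite (sum_n_S _ (S N)). fixeq. ring.
Qed.

Definition Phi (d : nat -> R) (x : R) := Series (fun n => Pp x n * (d n - d (S n))).

Lemma Phi_ex d x : ex_series (fun n => Rabs (d n - d (S n))) -> 0 <= x <= 1 ->
  ex_series (fun n => Pp x n * (d n - d (S n))).
Proof.
  intros Hd Hx. apply ex_series_le_R with (fun n => Rabs (d n - d (S n))); [|exact Hd].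
  intro n. rewrite Rabs_mult. pose proof (Pp_bound x n Hx). pose proof (Rabs_pos (d n - d (S n))). nra.
Qed.

Lemma abel_conv d x : is_lim_seq d 0 -> ex_series (fun n => Rabs (d n - d (S n))) -> 0 <= x <= 1 ->
  is_lim_seq (fun N => sum_n (fun n => (- x) ^ n * d n) N) (Phi d x).
Proof.
  intros Hd0 Hd Hx.
  apply is_lim_seq_incr_1.
  eapply is_lim_seq_ext. intro N. symmetry. apply sbp_x.
  replace (Phi d x) with (0 + Phi d x) by ring.
  apply is_lim_seq_plus'.
  - apply is_lim_seq_le_le with (u := fun N => - Rabs (d (S N))) (w := fun N => Rabs (d (S N))).
    + intro N. pose proof (Pp_bound x (S N) Hx) as Q1. pose proof (Rabs_pos (d (S N))) as Q2.
      assert (Q3 : Rabs (Pp x (S N) * d (S N)) <= Rabs (d (S N))).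
      { rewrite Rabs_mult. nra. }
      apply Rabs_le_between in Q3. lra.
    + pose proof (is_lim_seq_abs _ _ Hd0) as K. simpl in K. rewrite Rabs_R0 in K.
      apply is_lim_seq_incr_1 in K.
      pose proof (proj1 (is_lim_seq_opp _ _) K) as K2. simpl in K2. rewrite Ropp_0 in K2. exact K2.
    + pose proof (is_lim_seq_abs _ _ Hd0) as K. simpl in K. rewrite Rabs_R0 in K.
      apply is_lim_seq_incr_1 in K. exact K.
  - apply (Series_correct (fun n => Pp x n * (d n - d (S n)))). apply Phi_ex; assumption.
Qed.

Lemma abel_cont d (xs : nat -> R) : ex_series (fun n => Rabs (d n - d (S n))) ->
  (forall p, 0 <= xs p <= 1) -> is_lim_seq xs 1 ->
  is_lim_seq (fun p => Phi d (xs p)) (Phi d 1).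
Proof.
  intros Hd Hx Hl. unfold Phi.
  apply series_dct with (h := fun n => Rabs (d n - d (S n))); [|intros p n|exact Hd].
  - intro n. apply is_lim_seq_mult'; [|apply is_lim_seq_const].
    unfold Pp. apply lim_sum. intro i. apply lim_pow.
    pose proof (proj1 (is_lim_seq_opp _ _) Hl) as K. simpl in K. exact K.
  - rewrite Rabs_mult. pose proof (Pp_bound (xs p) n (Hx p)). pose proof (Rabs_pos (d n - d (S n))). nra.
Qed.


Lemma rad_ge1 p : forall a : nat -> R, (forall n, Rabs (a n) <= INR (S n) ^ p) -> Rbar_le 1 (CV_radius a).
Proof.
  induction p; intros a Ha.
  - destruct (CV_radius_bounded a) as [Hub _]. apply Hub. exists 1. intro n.
    rewrite pow1, Rmult_1_r. specialize (Ha n). simpl in Ha. exact Ha.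
  - set (b := fun n => match n with O => 0 | S n' => a n' / INR (S n') end).
    assert (E : forall n, PS_derive b n = a n).
    { intro n. unfold PS_derive, b. field. pose proof (INR_S_pos n). lra. }
    rewrite <- (CV_radius_ext _ _ E), CV_radius_derive.
    apply IHp. intro n. destruct n as [|n]; unfold b.
    + rewrite Rabs_R0. apply pow_le. pose proof (INR_S_pos 0). lra.
    + specialize (Ha n). pose proof (INR_S_pos n) as Hp.
      unfold Rdiv. rewrite Rabs_mult. rewrite (Rabs_pos_eq (/ INR (S n))) by (left; apply Rinv_0_lt_compat; exact Hp).
      apply Rle_trans with (INR (S n) ^ S p * / INR (S n)).
      { apply Rmult_le_compat_r. left; apply Rinv_0_lt_compat; lra. exact Ha. }
      replace (INR (S n) ^ S p * / INR (S n)) with (INR (S n) ^ p) by (change (INR (S n) ^ S p) with (INR (S n) * INR (S n) ^ p); field; lra).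
      apply pow_incr. split. lra. apply le_INR. lia.
Qed.

Lemma rad_lt (a : nat -> R) p x : (forall n, Rabs (a n) <= INR (S n) ^ p) -> Rabs x < 1 ->
  Rbar_lt (Rabs x) (CV_radius a).
Proof.
  intros Ha Hx. pose proof (rad_ge1 p a Ha) as Hr.
  destruct (CV_radius a) as [r| |]; simpl in *; try tauto. lra.
Qed.

Lemma PSeries_shift_minus (a b : nat -> R) x :
  Rbar_lt (Rabs x) (CV_radius a) -> Rbar_lt (Rabs x) (CV_radius b) ->
  PSeries a x - x * PSeries b x =
  PSeries (fun n => a n - match n with O => 0 | S n' => b n' end) x.
Proof.
  intros Ha Hb. rewrite <- PSeries_incr_1.
  rewrite <- PSeries_minus.
  - apply PSeries_ext. intro n. unfold PS_minus, PS_incr_1. destruct n; simpl; fixeq.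
    + unfold plus, opp, zero; simpl. ring.
    + unfold plus, opp; simpl. ring.
  - apply CV_radius_inside. exact Ha.
  - apply CV_radius_inside. rewrite CV_radius_incr_1. exact Hb.
Qed.

Lemma PSeries_shift_plus (a b : nat -> R) x :
  Rbar_lt (Rabs x) (CV_radius a) -> Rbar_lt (Rabs x) (CV_radius b) ->
  PSeries a x + x * PSeries b x =
  PSeries (fun n => a n + match n with O => 0 | S n' => b n' end) x.
Proof.
  intros Ha Hb. rewrite <- PSeries_incr_1.
  rewrite <- PSeries_plus.
  - apply PSeries_ext. intro n. unfold PS_plus, PS_incr_1. destruct n; simpl; fixeq.
    + unfold plus, zero; simpl. ring.
    + unfold plus; simpl. ring.
  - apply CV_radius_inside. exact Ha.
  - apply CV_radius_inside. rewrite CV_radius_incr_1. exact Hb.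
Qed.

Lemma PSeries_delta (a : nat -> R) x : (forall n, a (S n) = 0) -> PSeries a x = a 0%nat.
Proof.
  intros Ha. apply is_series_unique.
  change (is_lim_seq (sum_n (fun k => a k * x ^ k)) (a 0%nat)).
  eapply is_lim_seq_ext. 2: apply is_lim_seq_const.
  intro N. induction N. rewrite sum_n_0. simpl. fixeq; ring.
  rewrite sum_n_S, <- IHN, Ha. fixeq; ring.
Qed.

Lemma PSeries_incr (b : nat -> R) x :
  PSeries (fun n => match n with O => 0 | S n' => b n' end) x = x * PSeries b x.
Proof. rewrite <- PSeries_incr_1. apply PSeries_ext. intro n. destruct n; reflexivity. Qed.


Definition e (i n : nat) : R := mzv_trunc (repeat 1%Z i) n.
Definition lam (l i : nat) (n : nat) : R := if Nat.eqb n 0 then 0 else e i (n - 1) / INR n ^ l.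
Definition Lam l i v := PSeries (lam l i) v.
Definition E i v := PSeries (e i) v.
Definition cc (k j n : nat) : R := mzv_trunc (repeat 1%Z j ++ (-1)%Z :: repeat 1%Z k) n.
Definition dd k j n := if Nat.eqb n 0 then 0 else cc k j (n - 1) / INR n.
Definition alpha k j n := (-1) ^ n * dd k j n.
Definition A k j x := PSeries (alpha k j) x.

Lemma unit_repeat i : unit_list (repeat 1%Z i).
Proof. induction i; constructor; auto. Qed.

Lemma unit_cc k j : unit_list (repeat 1%Z j ++ (-1)%Z :: repeat 1%Z k).
Proof. apply Forall_app. split. apply unit_repeat. constructor. reflexivity. apply unit_repeat. Qed.

Lemma H_le_INRS n p : H n ^ p <= INR (S n) ^ p.
Proof.
  apply pow_incr. split. apply H_nonneg. eapply Rle_trans. apply H_le_n. apply le_INR. lia.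
Qed.

Lemma e_bound i n : Rabs (e i n) <= INR (S n) ^ i.
Proof.
  unfold e. eapply Rle_trans. apply mzv_bound. apply unit_repeat.
  rewrite repeat_length. apply H_le_INRS.
Qed.

Lemma cc_bound k j n : Rabs (cc k j n) <= H n ^ (j + S k).
Proof.
  unfold cc. eapply Rle_trans. apply mzv_bound. apply unit_cc.
  rewrite length_app, repeat_length. simpl. rewrite repeat_length. lra.
Qed.

Lemma inv_pow_le1 n l : (1 <= n)%nat -> / INR n ^ l <= 1.
Proof.
  intros Hn. assert (1 <= INR n) by (replace 1 with (INR 1) by reflexivity; apply le_INR; lia).
  rewrite <- Rinv_1. apply Rinv_le_contravar. lra. apply pow_R1_Rle. lra.
Qed.

Lemma inv_pow_pos n l : (1 <= n)%nat -> 0 < / INR n ^ l.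
Proof.
  intros Hn. apply Rinv_0_lt_compat. apply pow_lt. apply lt_0_INR. lia.
Qed.

Lemma lam_bound l i n : Rabs (lam l i n) <= INR (S n) ^ i.
Proof.
  unfold lam. destruct (Nat.eqb_spec n 0).
  - rewrite Rabs_R0. apply pow_le. pose proof (INR_S_pos n). lra.
  - unfold Rdiv. rewrite Rabs_mult, (Rabs_pos_eq (/ INR n ^ l)) by (left; apply inv_pow_pos; lia).
    pose proof (inv_pow_le1 n l ltac:(lia)) as B1. pose proof (inv_pow_pos n l ltac:(lia)) as B2.
    pose proof (e_bound i (n - 1)) as B3. pose proof (Rabs_pos (e i (n - 1))) as B4.
    replace (S (n - 1)) with n in B3 by lia.
    assert (INR n ^ i <= INR (S n) ^ i) by (apply pow_incr; split; [apply pos_INR| apply le_INR; lia]).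
    nra.
Qed.

Lemma alpha_bound k j n : Rabs (alpha k j n) <= INR (S n) ^ (j + S k).
Proof.
  unfold alpha, dd. rewrite Rabs_mult, pow_1_abs, Rmult_1_l.
  destruct (Nat.eqb_spec n 0).
  - rewrite Rabs_R0. apply pow_le. pose proof (INR_S_pos n). lra.
  - unfold Rdiv. rewrite Rabs_mult, (Rabs_pos_eq (/ INR n)) by (left; apply Rinv_0_lt_compat, lt_0_INR; lia).
    pose proof (inv_pow_le1 n 1 ltac:(lia)) as A1. pose proof (inv_pow_pos n 1 ltac:(lia)) as A2.
    rewrite pow_1 in A1, A2.
    pose proof (cc_bound k j (n - 1)) as A3. pose proof (Rabs_pos (cc k j (n - 1))).
    pose proof (H_le_INRS (n - 1) (j + S k)) as A4.
    assert (INR (S (n - 1)) ^ (j + S k) <= INR (S n) ^ (j + S k)) by (apply pow_incr; split; [apply pos_INR| apply le_INR; lia]).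
    nra.
Qed.

Lemma rad_e i x : Rabs x < 1 -> Rbar_lt (Rabs x) (CV_radius (e i)).
Proof. apply rad_lt with i. apply e_bound. Qed.
Lemma rad_lam l i x : Rabs x < 1 -> Rbar_lt (Rabs x) (CV_radius (lam l i)).
Proof. apply rad_lt with i. apply lam_bound. Qed.
Lemma rad_alpha k j x : Rabs x < 1 -> Rbar_lt (Rabs x) (CV_radius (alpha k j)).
Proof. apply rad_lt with (j + S k)%nat. apply alpha_bound. Qed.
Lemma rad_deriv a x : Rbar_lt (Rabs x) (CV_radius a) -> Rbar_lt (Rabs x) (CV_radius (PS_derive a)).
Proof. rewrite CV_radius_derive. auto. Qed.

Lemma lam_shift l i n :
  lam l i n = match n with O => 0 | S n' => PS_derive (lam (S l) i) n' end.
Proof.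
  destruct n as [|n]. reflexivity.
  unfold PS_derive, lam. simpl Nat.eqb. cbv iota. replace (S n - 1)%nat with n by lia.
  replace (S (S n) - 1)%nat with (S n) by lia. 
  pose proof (INR_S_pos n).
  change (INR (S n) ^ S l) with (INR (S n) * INR (S n) ^ l).
  field. split. apply pow_nonzero. lra. lra.
Qed.

Lemma lam1_deriv i n : PS_derive (lam 1 i) n = e i n.
Proof.
  unfold PS_derive, lam. simpl Nat.eqb. cbv iota. replace (S n - 1)%nat with n by lia.
  pose proof (INR_S_pos n). rewrite pow_1. field. lra.
Qed.

Lemma e0 n : e 0 n = 1.
Proof. reflexivity. Qed.

Lemma eS_0 i : e (S i) 0 = 0.
Proof. unfold e. simpl repeat. apply mzv_trunc_0. Qed.

Lemma eS_S i n : e (S i) (S n) = e (S i) n + e i n / INR (S n).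
Proof. unfold e. simpl repeat. rewrite mzv_trunc_S, mzv_term_1. unfold Rdiv. ring. Qed.

Lemma e_diff i n :
  e (S i) n - match n with O => 0 | S n' => e (S i) n' end = lam 1 i n.
Proof.
  destruct n as [|n].
  - rewrite eS_0. unfold lam. simpl. ring.
  - rewrite eS_S. unfold lam. simpl Nat.eqb. cbv iota. replace (S n - 1)%nat with n by lia.
    rewrite pow_1. ring.
Qed.

Lemma alpha_deriv k j n : PS_derive (alpha k j) n = (-1) ^ (S n) * cc k j n.
Proof.
  unfold PS_derive, alpha, dd. simpl Nat.eqb. cbv iota. replace (S n - 1)%nat with n by lia.
  pose proof (INR_S_pos n). field. lra.
Qed.

Lemma cc_0 k j : cc k j 0 = 0.
Proof. unfold cc. destruct j; simpl; apply mzv_trunc_0. Qed.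

Lemma ccS_S k j n : cc k (S j) (S n) = cc k (S j) n + cc k j n / INR (S n).
Proof. unfold cc. simpl repeat. simpl app. rewrite mzv_trunc_S, mzv_term_1. unfold Rdiv. ring. Qed.

Lemma cc0_S k n : cc k 0 (S n) = cc k 0 n + (-1) ^ (S n) / INR (S n) * e k n.
Proof. unfold cc. simpl app. rewrite mzv_trunc_S, mzv_term_m1. reflexivity. Qed.

Lemma m1_sq n : (-1) ^ n * (-1) ^ n = 1.
Proof. rewrite <- Rpow_mult_distr. replace (-1 * -1) with 1 by ring. apply pow1. Qed.

Lemma alpha_sum_S k j n :
  PS_derive (alpha k (S j)) n + match n with O => 0 | S n' => PS_derive (alpha k (S j)) n' end
  = - alpha k j n.
Proof.
  rewrite alpha_deriv. destruct n as [|n].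
  - rewrite cc_0. unfold alpha, dd. simpl. ring.
  - rewrite alpha_deriv, ccS_S. unfold alpha, dd. simpl Nat.eqb. cbv iota.
    replace (S n - 1)%nat with n by lia. simpl pow. ring.
Qed.

Lemma alpha_sum_0 k n :
  PS_derive (alpha k 0) n + match n with O => 0 | S n' => PS_derive (alpha k 0) n' end
  = - lam 1 k n.
Proof.
  rewrite alpha_deriv. destruct n as [|n].
  - rewrite cc_0. unfold lam. simpl. ring.
  - rewrite alpha_deriv, cc0_S. unfold lam. simpl Nat.eqb. cbv iota.
    replace (S n - 1)%nat with n by lia. rewrite pow_1.
    pose proof (m1_sq n) as Hs. simpl pow.
    pose proof (INR_S_pos n) as Hq.
    set (s := (-1) ^ n) in *. set (q := INR (S n)) in *.
    transitivity (-(s*s) * e k n / q). field. lra.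
    rewrite Hs. field. lra.
Qed.


Lemma const_on (f : R -> R) a b : a <= b -> (forall t, a <= t <= b -> is_derive f t 0) -> f a = f b.
Proof.
  intros Hab Hd. destruct (Req_dec a b) as [->|Hne]. reflexivity.
  apply (eq_is_derive f a b). exact Hd. lra.
Qed.

Lemma Lam_deriv l i v : Rabs v < 1 -> is_derive (Lam (S l) i) v (PSeries (PS_derive (lam (S l) i)) v).
Proof. intros Hv. apply is_derive_PSeries. apply rad_lam. exact Hv. Qed.

Lemma Lam_rel l i v : Lam l i v = v * PSeries (PS_derive (lam (S l) i)) v.
Proof. unfold Lam. rewrite (PSeries_ext _ _ v (lam_shift l i)). apply PSeries_incr. Qed.

Lemma Lam1_deriv i v : Rabs v < 1 -> is_derive (Lam 1 i) v (E i v).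
Proof.
  intros Hv. pose proof (Lam_deriv 0 i v Hv) as D. unfold E.
  rewrite (PSeries_ext _ _ v (lam1_deriv i)) in D. exact D.
Qed.

Lemma E_rel0 v : Rabs v < 1 -> (1 - v) * E 0 v = 1.
Proof.
  intros Hv. unfold E.
  replace ((1 - v) * PSeries (e 0) v) with (PSeries (e 0) v - v * PSeries (e 0) v) by ring.
  rewrite PSeries_shift_minus by (apply rad_e; exact Hv).
  rewrite PSeries_delta. rewrite e0. ring.
  intro n. rewrite !e0. ring.
Qed.

Lemma E_relS i v : Rabs v < 1 -> (1 - v) * E (S i) v = Lam 1 i v.
Proof.
  intros Hv. unfold E.
  replace ((1 - v) * PSeries (e (S i)) v) with (PSeries (e (S i)) v - v * PSeries (e (S i)) v) by ring.
  rewrite PSeries_shift_minus by (apply rad_e; exact Hv).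
  unfold Lam. apply PSeries_ext. apply e_diff.
Qed.

Definition Ad k j x := PSeries (PS_derive (alpha k j)) x.

Lemma A_deriv k j x : Rabs x < 1 -> is_derive (A k j) x (Ad k j x).
Proof. intros Hx. apply is_derive_PSeries. apply rad_alpha. exact Hx. Qed.

Lemma A_relS k j x : Rabs x < 1 -> (1 + x) * Ad k (S j) x = - A k j x.
Proof.
  intros Hx. unfold Ad.
  replace ((1 + x) * PSeries (PS_derive (alpha k (S j))) x) with
    (PSeries (PS_derive (alpha k (S j))) x + x * PSeries (PS_derive (alpha k (S j))) x) by ring.
  rewrite PSeries_shift_plus by (apply rad_deriv, rad_alpha; exact Hx).
  rewrite (PSeries_ext _ _ x (alpha_sum_S k j)).
  unfold A. rewrite <- PSeries_opp. reflexivity.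
Qed.

Lemma A_rel0 k x : Rabs x < 1 -> (1 + x) * Ad k 0 x = - Lam 1 k x.
Proof.
  intros Hx. unfold Ad.
  replace ((1 + x) * PSeries (PS_derive (alpha k 0)) x) with
    (PSeries (PS_derive (alpha k 0)) x + x * PSeries (PS_derive (alpha k 0)) x) by ring.
  rewrite PSeries_shift_plus by (apply rad_deriv, rad_alpha; exact Hx).
  rewrite (PSeries_ext _ _ x (alpha_sum_0 k)).
  unfold Lam. rewrite <- PSeries_opp. reflexivity.
Qed.

Definition Lf (v : R) := - ln (1 - v).

Lemma Lf_pow_deriv n c t : t < 1 -> c <> 0 ->
  is_derive (fun s => Lf s ^ S n / c) t (Lf t ^ n * / (1 - t) * INR (S n) / c).
Proof.
  intros Ht Hc. unfold Lf. auto_derive. lra.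
  change (match n with 0%nat => 1 | S _ => INR n + 1 end) with (INR (S n)).
  replace (1 + - t) with (1 - t) by ring. field. lra.
Qed.

Lemma is_derive_sub (f g : R -> R) x df dg :
  is_derive f x df -> is_derive g x dg -> is_derive (fun t => f t - g t) x (df - dg).
Proof. intros Hf Hg. apply (is_derive_minus f g x df dg Hf Hg). Qed.

Lemma is_derive_eqv (f : R -> R) (x a b : R) : is_derive f x a -> a = b -> is_derive f x b.
Proof. intros H ->. exact H. Qed.

Lemma zero_on_ball (f : R -> R) : (forall t, Rabs t < 1 -> is_derive f t 0) -> f 0 = 0 ->
  forall v, Rabs v < 1 -> f v = 0.
Proof.
  intros Hd H0 v Hv. destruct (Rle_dec 0 v).
  - rewrite <- H0. symmetry. apply const_on. lra. intros t Ht. apply Hd.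
    apply Rabs_def1; apply Rabs_def2 in Hv; lra.
  - rewrite <- H0. apply const_on. lra. intros t Ht. apply Hd.
    apply Rabs_def1; apply Rabs_def2 in Hv; lra.
Qed.

Lemma zero_on_01 (f : R -> R) : (forall t, 0 < t < 1 -> is_derive f t 0) -> f (1/2) = 0 ->
  forall v, 0 < v < 1 -> f v = 0.
Proof.
  intros Hd H0 v Hv. destruct (Rle_dec (1/2) v).
  - rewrite <- H0. symmetry. apply const_on. lra. intros t Ht. apply Hd. lra.
  - rewrite <- H0. apply const_on. lra. intros t Ht. apply Hd. lra.
Qed.

Lemma fact_S_INR i : INR (fact (S i)) = INR (S i) * INR (fact i).
Proof. rewrite fact_simpl, mult_INR. reflexivity. Qed.

Lemma fact_pos i : 0 < INR (fact i).
Proof. apply lt_0_INR. apply lt_O_fact. Qed.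

Lemma Lam1_closed i : forall v, Rabs v < 1 -> Lam 1 i v = Lf v ^ S i / INR (fact (S i)).
Proof.
  induction i as [|i IH]; intros v Hv.
  -
    assert (Z := zero_on_ball (fun t => Lam 1 0 t - Lf t ^ 1 / INR (fact 1))).
    enough (Lam 1 0 v - Lf v ^ 1 / INR (fact 1) = 0) by lra.
    apply Z; [| |exact Hv].
    + intros t Ht. apply is_derive_eqv with (E 0 t - Lf t ^ 0 * / (1 - t) * INR 1 / INR (fact 1)).
      apply is_derive_sub. apply Lam1_deriv; exact Ht.
      apply Lf_pow_deriv. apply Rabs_def2 in Ht; lra. simpl; lra.
      assert (Ht1 : 1 - t <> 0) by (apply Rabs_def2 in Ht; lra).
      pose proof (E_rel0 t Ht) as Er. simpl. field_simplify; [|exact Ht1]. 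
      replace (E 0 t) with (1 / (1 - t)) by (field_simplify_eq; [lra|exact Ht1]).
      field. exact Ht1.
    + unfold Lam, Lf. rewrite PSeries_0. unfold lam. simpl. rewrite Rminus_0_r, ln_1. field.
  - assert (Z := zero_on_ball (fun t => Lam 1 (S i) t - Lf t ^ S (S i) / INR (fact (S (S i))))).
    enough (Lam 1 (S i) v - Lf v ^ S (S i) / INR (fact (S (S i))) = 0) by lra.
    apply Z; [| |exact Hv].
    + intros t Ht. apply is_derive_eqv with (E (S i) t - Lf t ^ (S i) * / (1 - t) * INR (S (S i)) / INR (fact (S (S i)))).
      apply is_derive_sub. apply Lam1_deriv; exact Ht.
      apply Lf_pow_deriv. apply Rabs_def2 in Ht; lra. pose proof (fact_pos (S (S i))); lra.
      assert (Ht1 : 1 - t <> 0) by (apply Rabs_def2 in Ht; lra).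
      pose proof (E_relS i t Ht) as Er. rewrite (IH t Ht) in Er.
      assert (HE : E (S i) t = Lf t ^ S i / INR (fact (S i)) / (1 - t)).
      { apply (Rmult_eq_reg_l (1 - t)); [|exact Ht1]. rewrite Er. field. pose proof (fact_pos (S i)); split; lra. }
      rewrite HE.
      rewrite (fact_S_INR (S i)). pose proof (fact_pos (S i)). pose proof (INR_S_pos (S i)).
      fixeq. field. repeat split; lra.
    + unfold Lam, Lf. rewrite PSeries_0. unfold lam. simpl. rewrite Rminus_0_r, ln_1. field.
      pose proof (fact_pos (S (S i))) as Hf2. simpl in Hf2. lra.
Qed.


Lemma isd_plus (f g : R -> R) x df dg : is_derive f x df -> is_derive g x dg ->
  is_derive (fun t => f t + g t) x (df + dg).
Proof. intros. apply (is_derive_plus f g x df dg); assumption. Qed.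
Lemma isd_mult (f g : R -> R) x df dg : is_derive f x df -> is_derive g x dg ->
  is_derive (fun t => f t * g t) x (df * g x + f x * dg).
Proof. intros. apply (is_derive_mult f g x df dg); try assumption. intros; apply Rmult_comm. Qed.
Lemma isd_const (c : R) x : is_derive (fun _ => c) x 0.
Proof. apply (is_derive_const c x). Qed.
Lemma isd_sum (f : nat -> R -> R) n x (d : nat -> R) :
  (forall k, (k <= n)%nat -> is_derive (f k) x (d k)) ->
  is_derive (fun y => sum_n (fun k => f k y) n) x (sum_n d n).
Proof. intros. apply (is_derive_sum_n f n x d). assumption. Qed.
Lemma isd_comp (f g : R -> R) x df dg : is_derive f (g x) df -> is_derive g x dg ->
  is_derive (fun t => f (g t)) x (dg * df).
Proof. intros. apply (is_derive_comp f g x df dg); assumption. Qed.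

Definition Mf (v : R) := - ln (2 * v).

Fixpoint J (q s i : nat) (v : R) : R :=
  match q with
  | O => Lam (S s) i v
  | S q' => Mf v ^ (S q') / INR (fact (S q')) * Lam (S s) i v + J q' (S s) i v
  end.

Lemma Mf_pow_deriv n c t : 0 < t -> c <> 0 ->
  is_derive (fun s => Mf s ^ S n / c) t (Mf t ^ n * (- / t) * INR (S n) / c).
Proof.
  intros Ht Hc. unfold Mf. auto_derive. lra.
  change (match n with 0%nat => 1 | S _ => INR n + 1 end) with (INR (S n)).
  field. lra.
Qed.

Lemma Lam_deriv' l i v : 0 < v < 1 -> is_derive (Lam (S l) i) v (Lam l i v / v).
Proof.
  intros Hv. apply is_derive_eqv with (PSeries (PS_derive (lam (S l) i)) v).
  apply Lam_deriv. rewrite Rabs_pos_eq; lra.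
  rewrite Lam_rel. field. lra.
Qed.

Lemma J_deriv q : forall s i v, 0 < v < 1 ->
  is_derive (J q s i) v (Mf v ^ q / INR (fact q) * (Lam s i v / v)).
Proof.
  induction q as [|q IH]; intros s i v Hv.
  - simpl J. apply is_derive_eqv with (Lam s i v / v). apply Lam_deriv'; exact Hv.
    simpl. field. lra.
  - simpl J.
    apply is_derive_eqv with
      ((Mf v ^ q * (- / v) * INR (S q) / INR (fact (S q)) * Lam (S s) i v +
        Mf v ^ S q / INR (fact (S q)) * (Lam s i v / v)) +
       Mf v ^ q / INR (fact q) * (Lam (S s) i v / v)).
    + apply (isd_plus (fun t => Mf t ^ S q / INR (fact (S q)) * Lam (S s) i t) (J q (S s) i)).
      apply (isd_mult (fun t => Mf t ^ S q / INR (fact (S q))) (Lam (S s) i)).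
      apply Mf_pow_deriv. lra. pose proof (fact_pos (S q)); lra.
      apply Lam_deriv'; exact Hv.
      apply IH; exact Hv.
    + rewrite (fact_S_INR q). pose proof (fact_pos q). pose proof (INR_S_pos q).
      field. repeat split; lra.
Qed.


Lemma binom_exp (a b : R) j :
  sum_n (fun i => a ^ (j - i) / INR (fact (j - i)) * (b ^ i / INR (fact i))) j = (a + b) ^ j / INR (fact j).
Proof.
  rewrite sum_n_Reals. rewrite (Rplus_comm a b), binomial.
  replace (sum_f_R0 (fun i => Binomial.C j i * b ^ i * a ^ (j - i)) j / INR (fact j)) with
    (/ INR (fact j) * sum_f_R0 (fun i => Binomial.C j i * b ^ i * a ^ (j - i)) j) by (unfold Rdiv; ring).
  rewrite scal_sum.
  apply sum_eq. intros i Hi. unfold Binomial.C.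
  pose proof (fact_pos i). pose proof (fact_pos (j - i)). pose proof (fact_pos j).
  field. repeat split; lra.
Qed.

Definition Tf i v := Lf v ^ i / INR (fact i).

Lemma E_closed i v : Rabs v < 1 -> E i v = Tf i v / (1 - v).
Proof.
  intros Hv. assert (H1 : 1 - v <> 0) by (apply Rabs_def2 in Hv; lra).
  apply (Rmult_eq_reg_l (1 - v)); [|exact H1].
  destruct i as [|i].
  - rewrite E_rel0 by exact Hv. unfold Tf. simpl. field. exact H1.
  - rewrite E_relS by exact Hv. rewrite Lam1_closed by exact Hv. unfold Tf. field.
    pose proof (fact_pos (S i)); split; lra.
Qed.

Definition Jc k i v := J (S k) 0 i v.

Lemma Jc_deriv k i v : 0 < v < 1 ->
  is_derive (Jc k i) v (Mf v ^ S k / INR (fact (S k)) * (Tf i v / (1 - v))).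
Proof.
  intros Hv. unfold Jc. apply is_derive_eqv with (Mf v ^ S k / INR (fact (S k)) * (Lam 0 i v / v)).
  apply J_deriv; exact Hv.
  rewrite Lam_rel. rewrite (PSeries_ext _ _ v (lam1_deriv i)). fold (E i v).
  rewrite E_closed by (rewrite Rabs_pos_eq; lra). pose proof (fact_pos (S k)). field. repeat split; lra.
Qed.

Definition Nf v := ln (1 - v).

Definition dpow p t := match p with O => 0 | S p' => Nf t ^ p' / INR (fact p') * (- / (1 - t)) end.

Lemma Nf_pow_deriv p t : t < 1 -> is_derive (fun s => Nf s ^ p / INR (fact p)) t (dpow p t).
Proof.
  intros Ht. destruct p as [|p].
  - simpl. apply is_derive_ext with (fun _ => 1 / 1). intro s. reflexivity. apply isd_const.
  - unfold Nf, dpow. pose proof (fact_pos (S p)) as Hf. auto_derive. lra.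
    change (match p with 0%nat => 1 | S _ => INR p + 1 end) with (INR (S p)).
    change (fact p + p * fact p)%nat with (fact (S p)).
    rewrite (fact_S_INR p) in *. pose proof (fact_pos p). pose proof (INR_S_pos p).
    unfold Nf. replace (1 + - t) with (1 - t) by ring. field. repeat split; lra.
Qed.

Definition Kc k i := Jc k i (1/2).

Definition Rf k j v := sum_n (fun i => Nf v ^ (j - i) / INR (fact (j - i)) * (Kc k i - Jc k i v)) j.

Lemma Rf_deriv0 k j t : 0 < t < 1 -> is_derive (Rf k j) t
  (sum_n (fun i => dpow (j - i) t * (Kc k i - Jc k i t)
     + Nf t ^ (j - i) / INR (fact (j - i)) * (0 - Mf t ^ S k / INR (fact (S k)) * (Tf i t / (1 - t)))) j).
Proof.
  intros Ht. unfold Rf. apply isd_sum. intros i Hi.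
  apply (isd_mult (fun s => Nf s ^ (j - i) / INR (fact (j - i))) (fun s => Kc k i - Jc k i s)).
  apply Nf_pow_deriv. lra.
  apply is_derive_sub. apply isd_const. apply Jc_deriv. exact Ht.
Qed.

Lemma Lf_Nf v : Lf v = - Nf v.
Proof. reflexivity. Qed.

Lemma sum_n_zero N : sum_n (fun _ => 0) N = 0.
Proof. induction N. rewrite sum_n_0; auto. rewrite sum_n_S, IHN. fixeq; ring. Qed.

Lemma Rf_deriv_0 k t : 0 < t < 1 ->
  is_derive (Rf k 0) t (- (Mf t ^ S k / INR (fact (S k))) / (1 - t)).
Proof.
  intros Ht. eapply is_derive_eqv. apply Rf_deriv0. exact Ht.
  rewrite sum_n_0. simpl dpow. unfold Tf. simpl. pose proof (fact_pos (S k)) as Hf. simpl in Hf. field. lra.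
Qed.

Lemma Rf_deriv_S k j t : 0 < t < 1 ->
  is_derive (Rf k (S j)) t (- Rf k j t / (1 - t)).
Proof.
  intros Ht. eapply is_derive_eqv. apply Rf_deriv0. exact Ht.
  rewrite sum_n_add.
  rewrite (sum_n_ext (fun i => Nf t ^ (S j - i) / INR (fact (S j - i)) * (0 - Mf t ^ S k / INR (fact (S k)) * (Tf i t / (1 - t))))
     (fun i => (- (Mf t ^ S k / INR (fact (S k))) / (1 - t)) *
     (Nf t ^ (S j - i) / INR (fact (S j - i)) * ((- Nf t) ^ i / INR (fact i))))).
  2:{ intro i. unfold Tf. rewrite Lf_Nf. pose proof (fact_pos (S k)). pose proof (fact_pos i). pose proof (fact_pos (S j - i)). fixeq. field. repeat split; lra. }
  rewrite sum_n_scal, binom_exp. replace (Nf t + - Nf t) with 0 by ring.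
  rewrite pow_i by lia. unfold Rdiv at 3. rewrite Rmult_0_l, Rmult_0_r, Rplus_0_r.
  rewrite sum_n_S. replace (S j - S j)%nat with 0%nat by lia. simpl dpow at 2.
  rewrite Rmult_0_l, Rplus_0_r.
  unfold Rf.
  transitivity ((- / (1 - t)) * sum_n (fun i => Nf t ^ (j - i) / INR (fact (j - i)) * (Kc k i - Jc k i t)) j).
  2:{ fixeq. field. lra. }
  rewrite <- sum_n_scal.
  apply sum_n_ext_loc. intros i Hi. replace (S j - i)%nat with (S (j - i)) by lia.
  simpl dpow. fixeq. pose proof (fact_pos (j - i)). field. lra.
Qed.


Definition Fz k j v := (-1) ^ (S j) * A k j (1 - 2 * v).

Lemma Fz_deriv_gen k j t : 0 < t < 1 ->
  is_derive (Fz k j) t ((-1) ^ (S j) * (-2 * Ad k j (1 - 2 * t))).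
Proof.
  intros Ht. unfold Fz. apply is_derive_scal.
  apply (isd_comp (A k j) (fun s => 1 - 2 * s)).
  apply A_deriv. apply Rabs_def1; lra.
  auto_derive. auto. ring.
Qed.

Lemma Fz_deriv_0 k t : 0 < t < 1 ->
  is_derive (Fz k 0) t (- (Mf t ^ S k / INR (fact (S k))) / (1 - t)).
Proof.
  intros Ht. eapply is_derive_eqv. apply Fz_deriv_gen. exact Ht.
  assert (Hx : Rabs (1 - 2 * t) < 1) by (apply Rabs_def1; lra).
  pose proof (A_rel0 k _ Hx) as HA. rewrite Lam1_closed in HA by exact Hx.
  unfold Lf in HA. replace (1 - (1 - 2 * t)) with (2 * t) in HA by ring. fold (Mf t) in HA.
  assert (HAd : Ad k 0 (1 - 2 * t) = - (Mf t ^ S k / INR (fact (S k))) / (2 - 2 * t)).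
  { apply (Rmult_eq_reg_l (1 + (1 - 2 * t))). rewrite HA. pose proof (fact_pos (S k)). field. split; lra. lra. }
  rewrite HAd. pose proof (fact_pos (S k)). simpl pow. field. split; lra.
Qed.

Lemma Fz_deriv_S k j t : 0 < t < 1 ->
  is_derive (Fz k (S j)) t (- Fz k j t / (1 - t)).
Proof.
  intros Ht. eapply is_derive_eqv. apply Fz_deriv_gen. exact Ht.
  assert (Hx : Rabs (1 - 2 * t) < 1) by (apply Rabs_def1; lra).
  pose proof (A_relS k j _ Hx) as HA.
  assert (HAd : Ad k (S j) (1 - 2 * t) = - A k j (1 - 2 * t) / (2 - 2 * t)).
  { apply (Rmult_eq_reg_l (1 + (1 - 2 * t))). rewrite HA. field. lra. lra. }
  rewrite HAd. unfold Fz. simpl pow. field. lra.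
Qed.

Lemma main_identity k j : forall v, 0 < v < 1 -> Fz k j v = Rf k j v.
Proof.
  induction j as [|j IH]; intros v Hv.
  - enough (Fz k 0 v - Rf k 0 v = 0) by lra.
    apply (zero_on_01 (fun t => Fz k 0 t - Rf k 0 t)); [| |exact Hv].
    + intros t Ht. eapply is_derive_eqv. apply is_derive_sub.
      apply Fz_deriv_0; exact Ht. apply Rf_deriv_0; exact Ht. ring.
    + unfold Fz, Rf. replace (1 - 2 * (1/2)) with 0 by field. unfold A. rewrite PSeries_0.
      unfold alpha, dd. simpl. rewrite sum_n_0. unfold Kc. simpl. ring.
  - enough (Fz k (S j) v - Rf k (S j) v = 0) by lra.
    apply (zero_on_01 (fun t => Fz k (S j) t - Rf k (S j) t)); [| |exact Hv].
    + intros t Ht. eapply is_derive_eqv. apply is_derive_sub.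
      apply Fz_deriv_S; exact Ht. apply Rf_deriv_S; exact Ht. rewrite (IH t Ht). ring.
    + unfold Fz, Rf. replace (1 - 2 * (1/2)) with 0 by field. unfold A. rewrite PSeries_0.
      unfold alpha, dd. simpl Nat.eqb. cbv iota.
      rewrite (sum_n_ext _ (fun _ => 0)). rewrite sum_n_zero. ring.
      intro i. unfold Kc. fixeq. ring.
Qed.


Lemma Li_trunc_eq k m N :
  Li_trunc (1/2) ((k + 2)%nat :: repeat 1%nat m) N = sum_n (fun n => lam (k + 2) m n * (1/2) ^ n) N.
Proof.
  unfold Li_trunc. rewrite map_repeat. apply sum_n_ext. intro n.
  unfold lam. destruct (Nat.eqb n 0). fixeq; ring. unfold e. simpl Z.of_nat. fixeq. unfold Rdiv. ring.
Qed.

Lemma Li_conv k m : is_lim_seq (fun N => Li_trunc (1/2) ((k + 2)%nat :: repeat 1%nat m) N) (Lam (k + 2) m (1/2)).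
Proof.
  eapply is_lim_seq_ext. intro N. symmetry. apply Li_trunc_eq.
  unfold Lam, PSeries.
  assert (Hex : ex_series (fun n => lam (k + 2) m n * (1/2) ^ n)).
  { apply ex_series_Rabs. apply CV_disk_inside. apply rad_lam. rewrite Rabs_pos_eq; lra. }
  apply (Series_correct _ Hex).
Qed.

Definition dl (s : list Z) (n : nat) : R := if Nat.eqb n 0 then 0 else mzv_trunc s (n - 1) / INR n.

Lemma dl_lim a t : unit_list (a :: t) -> is_lim_seq (dl (a :: t)) 0.
Proof.
  intros Hu. apply is_lim_seq_incr_1.
  pose proof (Hpow_div_lim (length (a :: t))) as HL.
  apply is_lim_seq_le_le with (u := fun N => - (H N ^ length (a :: t) / INR (S N)))
                              (w := fun N => H N ^ length (a :: t) / INR (S N)).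
  - intro N. unfold dl. simpl Nat.eqb. cbv iota. replace (S N - 1)%nat with N by lia.
    pose proof (mzv_bound _ Hu N) as B. pose proof (INR_S_pos N) as P.
    apply Rabs_le_between.
    unfold Rdiv. rewrite Rabs_mult, (Rabs_pos_eq (/ INR (S N))) by (left; apply Rinv_0_lt_compat; lra).
    apply Rmult_le_compat_r. left; apply Rinv_0_lt_compat; lra. exact B.
  - pose proof (proj1 (is_lim_seq_opp _ _) HL) as K. simpl in K. rewrite Ropp_0 in K. exact K.
  - exact HL.
Qed.

Lemma dl_delta a t n : unit_list (a :: t) ->
  Rabs (dl (a :: t) n - dl (a :: t) (S n)) <= 2 * u (length (a :: t)) n.
Proof.
  intros Hu. destruct n as [|N].
  - unfold dl. simpl Nat.eqb. cbv iota. simpl (1 - 1)%nat. rewrite mzv_trunc_0.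
    unfold u. simpl Nat.eqb. cbv iota. replace (0 - 0 / INR 1) with 0 by (simpl; field). rewrite Rabs_R0. lra.
  - unfold dl. simpl Nat.eqb. cbv iota. replace (S N - 1)%nat with N by lia. replace (S (S N) - 1)%nat with (S N) by lia.
    set (c := fun n => mzv_trunc (a :: t) n).
    change (mzv_trunc (a :: t) N) with (c N). change (mzv_trunc (a :: t) (S N)) with (c (S N)).
    pose proof (mzv_bound _ Hu N) as B1. fold (c N) in B1.
    pose proof (mzv_incr_bound a t N Hu) as B2. fold (c N) (c (S N)) in B2.
    pose proof (INR_S_pos N) as P1. pose proof (INR_S_pos (S N)) as P2.
    set (L := length t) in *. change (length (a :: t)) with (S L) in *.
    assert (E : c N / INR (S N) - c (S N) / INR (S (S N)) =
                c N * (/ INR (S N) - / INR (S (S N))) - (c (S N) - c N) / INR (S (S N))) by (field; lra).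
    rewrite E. eapply Rle_trans. apply Rabs_triang. rewrite Rabs_Ropp.
    unfold u. simpl Nat.eqb. cbv iota.
    set (h := H (S N)).
    assert (Hh1 : 1 <= h) by apply H_ge1.
    assert (HhN : H N <= h) by apply H_le_S.
    assert (HN0 : 0 <= H N) by apply H_nonneg.
    assert (Hp1 : H N ^ S L <= h ^ S L) by (apply pow_incr; lra).
    assert (Hp2 : H N ^ L <= h ^ L) by (apply pow_incr; lra).
    assert (Hp3 : h ^ L <= h ^ S L) by (simpl; assert (0 <= h ^ L) by (apply pow_le; lra); nra).
    assert (Hd : / INR (S N) - / INR (S (S N)) = / (INR (S N) * INR (S (S N)))).
    { rewrite (S_INR (S N)). field. lra. }
    rewrite Hd.
    assert (Hq : 0 < / (INR (S N) * INR (S (S N)))) by (apply Rinv_0_lt_compat; nra).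
    rewrite Rabs_mult, (Rabs_pos_eq (/ (INR (S N) * INR (S (S N))))) by lra.
    unfold Rdiv. rewrite Rabs_mult, (Rabs_pos_eq (/ INR (S (S N)))) by (left; apply Rinv_0_lt_compat; lra).
    replace (/ (INR (S N) * INR (S (S N)))) with (/ INR (S N) * / INR (S (S N))) by (field; lra).
    replace (/ (INR (S N) * INR (S (S N)))) with (/ INR (S N) * / INR (S (S N))) in Hq by (field; lra).
    assert (T1 : Rabs (c N) * (/ INR (S N) * / INR (S (S N))) <= h ^ S L * (/ INR (S N) * / INR (S (S N)))).
    { apply Rmult_le_compat_r. lra. lra. }
    assert (T2 : Rabs (c (S N) - c N) * / INR (S (S N)) <= h ^ S L * (/ INR (S N) * / INR (S (S N)))).
    { apply Rle_trans with (H N ^ L * / INR (S N) * / INR (S (S N))).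
      apply Rmult_le_compat_r. left; apply Rinv_0_lt_compat; lra. exact B2.
      rewrite Rmult_assoc. apply Rmult_le_compat_r. lra. lra. }
    lra.
Qed.

Lemma dl_ex a t : unit_list (a :: t) -> ex_series (fun n => Rabs (dl (a :: t) n - dl (a :: t) (S n))).
Proof.
  intros Hu. apply ex_series_le_R with (fun n => 2 * u (length (a :: t)) n).
  intro n. rewrite Rabs_Rabsolu. apply dl_delta; exact Hu.
  apply ex_series_scal_R. apply ex_series_u.
Qed.


Definition vp (p : nat) : R := (1/2) ^ (p + 2).

Lemma vp_pos p : 0 < vp p.
Proof. unfold vp. apply pow_lt. lra. Qed.

Lemma vp_le p : vp p <= 1/4.
Proof.
  unfold vp. rewrite pow_add. replace ((1/2)^2) with (1/4) by (simpl; field).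
  assert (Q1 : (1/2)^p <= 1^p) by (apply pow_incr; lra). rewrite pow1 in Q1.
  assert (0 <= (1/2)^p) by (apply pow_le; lra). nra.
Qed.

Lemma vp_lim : is_lim_seq vp 0.
Proof.
  apply is_lim_seq_ext with (u := fun p => (1/2)^2 * (1/2)^p).
  intro p. unfold vp. rewrite pow_add. ring.
  replace (Finite 0) with (Rbar_mult ((1/2)^2) 0) by (simpl; f_equal; ring).
  apply is_lim_seq_scal_l. apply is_lim_seq_geom. rewrite Rabs_pos_eq; lra.
Qed.

Lemma Mf_vp p : Mf (vp p) = INR (S p) * ln 2.
Proof.
  unfold Mf, vp. replace (2 * (1/2) ^ (p + 2)) with (/ (2 ^ (S p))).
  - rewrite ln_Rinv by (apply pow_lt; lra). rewrite ln_pow by lra. ring.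
  - replace (p + 2)%nat with (S (S p)) by lia.
    replace (1/2) with (/2) by field. rewrite pow_inv.
    change (2 ^ S (S p)) with (2 * 2 ^ S p). field.
    apply pow_nonzero. lra.
Qed.

Lemma Lam_small l i : exists C, 0 <= C /\ forall v, 0 <= v <= 1/2 -> Rabs (Lam l i v) <= C * v.
Proof.
  set (b := fun n => lam l i (S n)).
  assert (Hb : Rbar_le 1 (CV_radius b)).
  { unfold b. change (fun n => lam l i (S n)) with (PS_decr_1 (lam l i)).
    rewrite CV_radius_decr_1. apply (rad_ge1 i). apply lam_bound. }
  assert (Hr : forall v, Rabs v < 1 -> Rbar_lt (Rabs v) (CV_radius b)).
  { intros v Hv. destruct (CV_radius b) as [r| |]; simpl in *; try tauto. lra. }
  exists (Series (fun n => Rabs (b n * (1/2) ^ n))). split.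
  - assert (Hex := CV_disk_inside b (1/2) ltac:(apply Hr; rewrite Rabs_pos_eq; lra)).
    apply Rle_trans with (Series (fun _ => 0)).
    + assert (Z0 : Series (fun _ => 0) = 0).
      { apply is_series_unique. change (is_lim_seq (sum_n (fun _ => 0)) 0).
        eapply is_lim_seq_ext. intro N. symmetry. apply sum_n_zero. apply is_lim_seq_const. }
      rewrite Z0. lra.
    + apply Series_le. intro n. split. lra. apply Rabs_pos. exact Hex.
  - intros v Hv.
    assert (E : Lam l i v = v * PSeries b v).
    { unfold Lam. rewrite <- PSeries_incr. apply PSeries_ext. intro n. destruct n; reflexivity. }
    rewrite E, Rabs_mult, Rabs_pos_eq by lra. rewrite Rmult_comm.
    apply Rmult_le_compat_r. lra.
    assert (Hex := CV_disk_inside b (1/2) ltac:(apply Hr; rewrite Rabs_pos_eq; lra)).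
    unfold PSeries. eapply Rle_trans. apply Series_Rabs.
    apply CV_disk_inside. apply Hr. rewrite Rabs_pos_eq; lra.
    apply Series_le. 2: exact Hex.
    intro n. split. apply Rabs_pos. rewrite !Rabs_mult. apply Rmult_le_compat_l. apply Rabs_pos.
    rewrite !Rabs_pos_eq by (apply pow_le; lra). apply pow_incr. lra.
Qed.

Lemma poly_geom n : is_lim_seq (fun p => INR (S p) ^ n * (1/2) ^ p) 0.
Proof.
  set (a := fun p => INR (S p) ^ n).
  assert (Hex : ex_series (fun p => Rabs (a p * (1/2) ^ p))).
  { apply CV_disk_inside. apply rad_lt with n. intro p. unfold a. rewrite Rabs_pos_eq. lra.
    apply pow_le. pose proof (INR_S_pos p). lra. rewrite Rabs_pos_eq; lra. }
  pose proof (ex_series_lim_0 _ Hex) as L.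
  eapply is_lim_seq_ext. 2: exact L. intro p. apply Rabs_pos_eq.
  apply Rmult_le_pos. apply pow_le. pose proof (INR_S_pos p). lra. apply pow_le. lra.
Qed.

Lemma ln2_pos : 0 < ln 2.
Proof. pose proof ln_lt_2. lra. Qed.

Lemma MfLam_lim n l i : is_lim_seq (fun p => Mf (vp p) ^ n * Lam l i (vp p)) 0.
Proof.
  destruct (Lam_small l i) as [C [HC HL]].
  set (K := ln 2 ^ n * C / 4).
  assert (HK : 0 <= K) by (unfold K; pose proof ln2_pos; assert (0 <= ln 2 ^ n) by (apply pow_le; lra); unfold Rdiv; apply Rmult_le_pos; [apply Rmult_le_pos; lra|lra]).
  assert (B : forall p, Rabs (Mf (vp p) ^ n * Lam l i (vp p)) <= K * (INR (S p) ^ n * (1/2) ^ p)).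
  { intro p. rewrite Rabs_mult, Mf_vp. rewrite <- RPow_abs, Rabs_mult.
    rewrite (Rabs_pos_eq (INR (S p))) by (pose proof (INR_S_pos p); lra).
    rewrite (Rabs_pos_eq (ln 2)) by (pose proof ln2_pos; lra).
    pose proof (vp_pos p). pose proof (vp_le p).
    specialize (HL (vp p) ltac:(lra)).
    rewrite Rpow_mult_distr.
    assert (0 <= INR (S p) ^ n * ln 2 ^ n) by (apply Rmult_le_pos; apply pow_le; [pose proof (INR_S_pos p)|pose proof ln2_pos]; lra).
    apply Rle_trans with (INR (S p) ^ n * ln 2 ^ n * (C * vp p)).
    apply Rmult_le_compat_l; assumption.
    unfold K, vp. rewrite pow_add. replace ((1/2)^2) with (1/4) by (simpl; field). right. field. }
  apply is_lim_seq_le_le with (u := fun p => - (K * (INR (S p) ^ n * (1/2) ^ p)))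
                              (w := fun p => K * (INR (S p) ^ n * (1/2) ^ p)).
  - intro p. apply Rabs_le_between. apply B.
  - pose proof (is_lim_seq_scal_l _ K 0 (poly_geom n)) as L. simpl in L. rewrite Rmult_0_r in L.
    pose proof (proj1 (is_lim_seq_opp _ _) L) as K2. simpl in K2. rewrite Ropp_0 in K2. exact K2.
  - pose proof (is_lim_seq_scal_l _ K 0 (poly_geom n)) as L. simpl in L. rewrite Rmult_0_r in L. exact L.
Qed.

Lemma J_lim q : forall s i, is_lim_seq (fun p => J q s i (vp p)) 0.
Proof.
  induction q as [|q IH]; intros s i.
  - simpl J. eapply is_lim_seq_ext. 2: apply (MfLam_lim 0 (S s) i). intro p. simpl. ring.
  - simpl J. replace (Finite 0) with (Finite (0 + 0)) by (f_equal; ring).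
    apply is_lim_seq_plus'. 2: apply IH.
    pose proof (is_lim_seq_scal_l _ (/ INR (fact (S q))) 0 (MfLam_lim (S q) (S s) i)) as L.
    simpl in L. rewrite Rmult_0_r in L.
    eapply is_lim_seq_ext. 2: exact L.
    intro p. unfold Rdiv. ring.
Qed.

Lemma Nf_lim : is_lim_seq (fun p => Nf (vp p)) 0.
Proof.
  unfold Nf. rewrite <- ln_1.
  apply is_lim_seq_continuous.
  - apply continuity_pt_filterlim. apply continuous_ln. lra.
  - replace (Finite 1) with (Finite (1 - 0)) by (f_equal; ring).
    apply is_lim_seq_minus'. apply is_lim_seq_const. apply vp_lim.
Qed.

Lemma sum_zero_pow (K : nat -> R) m :
  sum_n (fun i => 0 ^ (m - i) / INR (fact (m - i)) * (K i - 0)) m = K m.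
Proof.
  destruct m as [|m].
  - rewrite sum_n_0. simpl. fixeq. field.
  - rewrite sum_n_S. replace (S m - S m)%nat with 0%nat by lia.
    rewrite (sum_n_ext_loc _ (fun _ => 0)). rewrite sum_n_zero. simpl. fixeq. field.
    intros i Hi. replace (S m - i)%nat with (S (m - i)) by lia. simpl. unfold Rdiv. rewrite !Rmult_0_l. reflexivity.
Qed.

Lemma Rf_lim k m : is_lim_seq (fun p => Rf k m (vp p)) (Kc k m).
Proof.
  unfold Rf. rewrite <- (sum_zero_pow (Kc k) m).
  apply lim_sum. intro i.
  apply is_lim_seq_mult'.
  - apply is_lim_seq_mult'. apply lim_pow. apply Nf_lim. apply is_lim_seq_const.
  - apply is_lim_seq_minus'. apply is_lim_seq_const. unfold Jc. apply J_lim.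
Qed.

Lemma J_half q : forall s i, J q s i (1/2) = Lam (S (s + q)) i (1/2).
Proof.
  assert (HM : Mf (1/2) = 0) by (unfold Mf; replace (2 * (1/2)) with 1 by field; rewrite ln_1; ring).
  induction q as [|q IH]; intros s i.
  - simpl. rewrite Nat.add_0_r. reflexivity.
  - simpl J. rewrite IH, HM. unfold Rdiv. rewrite !Rmult_0_l, Rplus_0_l. replace (S s + q)%nat with (s + S q)%nat by lia.
    reflexivity.
Qed.

Lemma Kc_val k m : Kc k m = Lam (k + 2) m (1/2).
Proof. unfold Kc, Jc. rewrite J_half. f_equal. lia. Qed.


Theorem theorem3p2 (m k : nat) :
  exists L : R,
    Li_converges_to (1 / 2) ((k + 2)%nat :: repeat 1%nat m) L /\
    mzv_converges_to ((-1)%Z :: repeat 1%Z m ++ (-1)%Z :: repeat 1%Z k)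
                     ((-1) ^ (m + 1) * L).
Proof.
  exists (Lam (k + 2) m (1/2)). split.
  { apply Li_conv. }
  assert (HLs : exists a t, repeat 1%Z m ++ (-1)%Z :: repeat 1%Z k = a :: t) by (destruct m; simpl; eauto).
  destruct HLs as [a [t HLs]].
  assert (Hu : unit_list (a :: t)) by (rewrite <- HLs; apply unit_cc).
  set (d := dl (a :: t)).
  assert (Hdd : forall n, dd k m n = d n).
  { intro n. unfold dd, d, dl, cc. rewrite HLs. reflexivity. }
  pose proof (dl_lim a t Hu) as Hd0. pose proof (dl_ex a t Hu) as Hdx.
  fold d in Hd0, Hdx.
  assert (HZ : is_lim_seq (fun N => mzv_trunc ((-1)%Z :: repeat 1%Z m ++ (-1)%Z :: repeat 1%Z k) N) (Phi d 1)).
  { eapply is_lim_seq_ext. 2: apply (abel_conv d 1 Hd0 Hdx); lra.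
    intro N. cbn [mzv_trunc]. apply sum_n_ext. intro n. rewrite <- Hdd. unfold dd, cc.
    destruct (Nat.eqb n 0). fixeq; ring. rewrite mzv_term_m1.
    replace (- (1)) with (-1) by ring. fixeq. unfold Rdiv. ring. }
  assert (Hx : forall p, 0 <= 1 - 2 * vp p <= 1).
  { intro p. pose proof (vp_pos p). pose proof (vp_le p). lra. }
  assert (HA : forall p, A k m (1 - 2 * vp p) = Phi d (1 - 2 * vp p)).
  { intro p. unfold A, PSeries. apply is_series_unique.
    set (x := 1 - 2 * vp p).
    change (is_lim_seq (sum_n (fun n => alpha k m n * x ^ n)) (Phi d x)).
    eapply is_lim_seq_ext. 2: apply (abel_conv d x Hd0 Hdx (Hx p)).
    intro N. apply sum_n_ext. intro n. unfold alpha. rewrite Hdd.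
    replace (- x) with (-1 * x) by ring. rewrite Rpow_mult_distr. fixeq. ring. }
  assert (HI : forall p, (-1) ^ (S m) * Phi d (1 - 2 * vp p) = Rf k m (vp p)).
  { intro p. rewrite <- HA. apply (main_identity k m (vp p)).
    pose proof (vp_pos p). pose proof (vp_le p). lra. }
  assert (Hxs : is_lim_seq (fun p => 1 - 2 * vp p) 1).
  { replace (Finite 1) with (Finite (1 - 2 * 0)) by (f_equal; ring).
    apply is_lim_seq_minus'. apply is_lim_seq_const.
    pose proof (is_lim_seq_scal_l _ 2 0 vp_lim) as L. simpl in L. exact L. }
  assert (L1 : is_lim_seq (fun p => (-1) ^ (S m) * Phi d (1 - 2 * vp p)) ((-1) ^ (S m) * Phi d 1)).
  { apply is_lim_seq_mult'. apply is_lim_seq_const. apply abel_cont; assumption. }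
  assert (L2 : is_lim_seq (fun p => (-1) ^ (S m) * Phi d (1 - 2 * vp p)) (Lam (k + 2) m (1/2))).
  { eapply is_lim_seq_ext. intro p. symmetry. apply HI. rewrite <- Kc_val. apply Rf_lim. }
  apply is_lim_seq_unique in L1. apply is_lim_seq_unique in L2.
  rewrite L1 in L2. injection L2 as Heq.
  unfold mzv_converges_to.
  replace ((-1) ^ (m + 1) * Lam (k + 2) m (1 / 2)) with (Phi d 1). exact HZ.
  rewrite <- Heq. rewrite Nat.add_1_r. rewrite <- Rmult_assoc, m1_sq. ring.
Qed.
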